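(* Fix $K$ and $K_T$ with $0<K_T<K$. Among all partitions $\mathcal{C}$ of $[N]$ into $K$ equally sized clusters, the set of maximizers of $\operatorname{Tr}\big(\operatorname{Cov}_{\mathbf{Z}\sim\mathcal{D}(\mathcal{C})}(\mathbf{Z},\mathbf{e})\big)$ equals the set of minimizers of $\mathcal{H}(\mathcal{C})$, where $\operatorname{Cov}(\mathbf{Z},\mathbf{e})=\mathbb{E}\big[(\mathbf{Z}-\mathbb{E}\mathbf{Z})(\mathbf{e}-\mathbb{E}\mathbf{e})^T\big]$ and $\mathbf{e}=(e_1(\mathbf{Z}),\dots,e_N(\mathbf{Z}))$.
   Context: Setting: $N$ experimental units $[N]$ and $M$ interference units $[M]$, with known weights $w_{is}\ge 0$; assume $\sum_{s} w_{is}>0$ for every $i$ and $\sum_i w_{is}>0$ for every $s$. For $\mathbf{Z}\in\{-1,1\}^N$, dose $d_s=\frac{\sum_{i} w_{is}Z_i}{\sum_{i} w_{is}}$ and exposure $e_i(\mathbf{Z})=\frac{\sum_{s} w_{is}d_s}{\sum_{s} w_{is}}$. Balanced $K$-cluster randomized design $\mathcal{D}(\mathcal{C})$: $K\ge2$ divides $N$, $\mathcal{C}$ is a partition of $[N]$ into $K$ clusters of size $N/K$, $\mathcal{C}(i)$ is the cluster containing $i$; choose $K_T$ clusters uniformly at random, set $Z_i=1$ on them and $Z_i=-1$ elsewhere. $\mathcal{H}(\mathcal{C})=\sum_{i\in[N]}\sum_{j\in[N]\setminus\mathcal{C}(i)}\sum_{s\in[M]}\frac{w_{is}}{\sum_{s'}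 w_{is'}}\frac{w_{js}}{\sum_{k} w_{ks}}$. *)

(* Defs.v *)
From mathcomp Require Import all_boot all_order all_algebra.
Set Implicit Arguments. Unset Strict Implicit. Unset Printing Implicit Defensive.
Import Order.TTheory GRing.Theory Num.Theory.
Local Open Scope ring_scope.

Section Defs.
Variable R : realFieldType.
Variables N M : nat.
Variable w : 'I_N -> 'I_M -> R.

Definition dose (Z : 'I_N -> R) (s : 'I_M) : R :=
  (\sum_(i < N) w i s * Z i) / (\sum_(i < N) w i s).

Definition exposure (Z : 'I_N -> R) (i : 'I_N) : R :=
  (\sum_(s < M) w i s * dose Z s) / (\sum_(s < M) w i s).

Definition balanced_partition (K : nat) (C : {set {set 'I_N}}) : bool :=
  [&& partition C [set: 'I_N], #|C| == K & [forall B in C, #|B| == (N %/ K)%N]].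

(* the support of D(C): sets of K_T treated clusters (chosen uniformly) *)
Definition treated_choices (KT : nat) (C : {set {set 'I_N}}) :
  {set {set {set 'I_N}}} :=
  [set S : {set {set 'I_N}} | (S \subset C) && (#|S| == KT)].

Definition Zof (C : {set {set 'I_N}}) (S : {set {set 'I_N}}) (i : 'I_N) : R :=
  if pblock C i \in S then 1 else -1.

Definition Edesign (KT : nat) (C : {set {set 'I_N}})
  (f : {set {set 'I_N}} -> R) : R :=
  (\sum_(S in treated_choices KT C) f S) / #|treated_choices KT C|%:R.

Definition trace_cov (KT : nat) (C : {set {set 'I_N}}) : R :=
  \sum_(i < N)
    Edesign KT C (fun S =>
      (Zof C S i - Edesign KT C (fun S' => Zof C S' i)) *
      (exposure (Zof C S) i - Edesign KT C (fun S' => exposure (Zof C S') i))).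

Definition Hcal (C : {set {set 'I_N}}) : R :=
  \sum_(i < N) \sum_(j < N | j \notin pblock C i) \sum_(s < M)
    (w i s / \sum_(s' < M) w i s') * (w j s / \sum_(k < N) w k s).

End Defs.

(* Main.v *)
Require Import Defs.
From mathcomp Require Import all_boot all_order all_algebra.
From mathcomp Require Import ring lra.
Import Order.TTheory GRing.Theory Num.Theory.
Local Open Scope ring_scope.

Section Main.
Variables (R : realFieldType) (N M : nat) (w : 'I_N -> 'I_M -> R) (K KT : nat).
Hypothesis row_pos : forall i, 0 < \sum_(s < M) w i s.
Hypothesis col_pos : forall s, 0 < \sum_(i < N) w i s.
Hypothesis K_ge2 : (2 <= K)%N.
Hypothesis KT_pos : (0 < KT)%N.
Hypothesis KT_lt : (KT < K)%N.

Definition mu : R := (2 * KT%:R - K%:R) / K%:R.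
Definition gg : R := ((2 * KT%:R - K%:R) * mu - 1) / (K%:R - 1).

Definition z (A : {set 'I_N}) (S : {set {set 'I_N}}) : R :=
  if A \in S then 1 else -1.

Definition sw (B B' A : {set 'I_N}) := if A == B then B' else if A == B' then B else A.

Lemma swK B B' : involutive (sw B B').
Proof.
move=> A; rewrite /sw; have [->|hAB] := eqVneq A B.
  by rewrite eqxx; have [->|h] := eqVneq B' B.
have [->|hAB'] := eqVneq A B'; first by rewrite eqxx.
by rewrite (negbTE hAB) (negbTE hAB').
Qed.

Lemma sw_inj B B' : injective (sw B B').
Proof. exact: can_inj (swK B B'). Qed.

Lemma z_sw B B' A (S : {set {set 'I_N}}) : z A (sw B B' @: S) = z (sw B B' A) S.
Proof. by rewrite /z -{1}(swK B B' A) mem_imset //; exact: sw_inj. Qed.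

Definition c i j : R := \sum_(s < M)
    (w i s / \sum_(s' < M) w i s') * (w j s / \sum_(k < N) w k s).

Lemma exposure_lin Z i : exposure w Z i = \sum_j c i j * Z j.
Proof.
rewrite /exposure /dose /c.
under [RHS]eq_bigr => j _ do rewrite mulr_suml.
rewrite exchange_big /= mulr_suml; apply: eq_bigr => s _.
rewrite !mulr_suml !mulr_sumr !mulr_suml; apply: eq_bigr => j _; ring.
Qed.

Lemma sum_c : \sum_i \sum_j c i j = N%:R.
Proof.
transitivity (\sum_(i < N) (1 : R)); last by rewrite sumr_const card_ord.
apply: eq_bigr => i _; rewrite /c exchange_big /=.
transitivity (\sum_(s < M) w i s / \sum_(s' < M) w i s'); last first.
  by rewrite -mulr_suml divff // gt_eqF.
apply: eq_bigr => s _; rewrite -mulr_sumr -mulr_suml divff ?mulr1 //.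
by rewrite gt_eqF.
Qed.

Section Fixed.
Variable C : {set {set 'I_N}}.
Hypothesis hC : balanced_partition K C.

Local Notation tc := (treated_choices KT C).
Local Notation E := (@Edesign R N KT C).

Lemma partC : partition C [set: 'I_N].
Proof. by case/and3P: hC. Qed.

Lemma cardC : #|C| = K.
Proof. by case/and3P: hC => _ /eqP. Qed.

Lemma n_pos : 0 < #|tc|%:R :> R.
Proof.
by rewrite ltr0n /treated_choices cards_draws cardC bin_gt0 ltnW.
Qed.

Lemma E_add f g : E (fun S => f S + g S) = E f + E g.
Proof. by rewrite /Edesign big_split mulrDl. Qed.

Lemma E_scale a f : E (fun S => a * f S) = a * E f.
Proof. by rewrite /Edesign -mulr_sumr mulrA. Qed.

Lemma E_const a : E (fun _ => a) = a.
Proof.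
rewrite /Edesign sumr_const -[a *+ _]mulr_natr mulfK //; by rewrite gt_eqF ?n_pos.
Qed.

Lemma E_ext f g : (forall S, S \in tc -> f S = g S) -> E f = E g.
Proof. by move=> h; rewrite /Edesign; congr (_ / _); apply: eq_bigr. Qed.

Lemma E_sum (I : finType) (P : pred I) (F : I -> {set {set 'I_N}} -> R) :
  E (fun S => \sum_(j | P j) F j S) = \sum_(j | P j) E (F j).
Proof. by rewrite /Edesign exchange_big /= mulr_suml. Qed.

Lemma E_cov X Y : E (fun S => (X S - E X) * (Y S - E Y)) =
  E (fun S => X S * Y S) - E X * E Y.
Proof.
rewrite (@E_ext _ (fun S => X S * Y S + ((- E X) * Y S + ((- E Y) * X S
   + E X * E Y)))); last by move=> S _; ring.
rewrite !E_add !E_scale E_const /Edesign; ring.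
Qed.

Lemma sw_mem B B' : B \in C -> B' \in C -> forall A, (sw B B' A \in C) = (A \in C).
Proof.
move=> hB hB' A; rewrite /sw; case: (A =P B) => [->|_]; first by rewrite hB hB'.
by case: (A =P B') => [->|_]; first by rewrite hB hB'.
Qed.

Lemma E_sw B B' F : B \in C -> B' \in C -> E F = E (fun S => F (sw B B' @: S)).
Proof.
move=> hB hB'; rewrite /Edesign; congr (_ / _).
rewrite (reindex_inj (imset_inj (@sw_inj B B'))) /=.
apply: eq_bigl => S; rewrite /treated_choices !inE card_imset; last exact: sw_inj.
congr (_ && _); apply/subsetP/subsetP => h x.
  by move=> xS; rewrite -(@sw_mem B B' hB hB'); apply: h; apply: imset_f.
by case/imsetP => y yS ->; rewrite sw_mem //; apply: h.
Qed.

Lemma sumz S : S \in tc -> \sum_(A in C) z A S = 2 * KT%:R - K%:R.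
Proof.
rewrite inE => /andP[sub /eqP cS].
rewrite (@big_setID _ _ _ _ C S) /= (setIidPr sub).
rewrite (eq_bigr (fun _ => 1)); last by move=> A hA; rewrite /z hA.
rewrite [X in _ + X](eq_bigr (fun _ => -1)); last first.
  by move=> A; rewrite inE => /andP[/negbTE hA _]; rewrite /z hA.
rewrite !sumr_const cardsD (setIidPr sub) cS cardC mulNrn natrB ?(ltnW KT_lt) //.
ring.
Qed.

Lemma Ez A : A \in C -> E (z A) = mu.
Proof.
move=> hA.
have h B : B \in C -> E (z B) = E (z A).
  move=> hB; rewrite (@E_sw B A (z B) hB hA); apply: E_ext => S _.
  by rewrite z_sw /sw eqxx.
have hK : K%:R * E (z A) = 2 * KT%:R - K%:R.
  rewrite -(E_const (2 * KT%:R - K%:R)) -(E_ext _ _ sumz) E_sum.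
  by rewrite (eq_bigr _ h) sumr_const cardC mulr_natl.
have K0 : K%:R != 0 :> R by rewrite pnatr_eq0 -lt0n; apply: leq_trans K_ge2.
by rewrite /mu -hK [K%:R * _]mulrC mulfK.
Qed.

Lemma zz A S : z A S * z A S = 1.
Proof. by rewrite /z; case: ifP => _; rewrite ?mulr1 ?mulrNN ?mulr1. Qed.

Lemma Ezz A B : A \in C -> B \in C -> A != B -> E (fun S => z A S * z B S) = gg.
Proof.
move=> hA hB nAB.
have h B' : B' \in C :\ A -> E (fun S => z A S * z B' S) = E (fun S => z A S * z B S).
  rewrite !inE => /andP[nB'A hB'].
  rewrite (@E_sw B' B _ hB' hB); apply: E_ext => S _; rewrite !z_sw /sw eqxx.
  by rewrite (eq_sym A B') (negbTE nB'A) (negbTE nAB).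
have K1 : K%:R - 1 != 0 :> R.
  by rewrite subr_eq0 pnatr_eq1 neq_ltn K_ge2 orbT.
have e1 : E (fun S => \sum_(B' in C) z A S * z B' S) = (2 * KT%:R - K%:R) * mu.
  rewrite -(Ez A hA) -E_scale; apply: E_ext => S hS; rewrite -mulr_sumr sumz //; ring.
move: e1; rewrite E_sum (bigD1 A) //= (E_ext _ (fun _ => 1)); last by move=> S _; exact: zz.
rewrite E_const (eq_bigl (fun B' => B' \in C :\ A)); last by move=> B'; rewrite !inE andbC.
rewrite (eq_bigr _ h) sumr_const.
have cK : #|C :\ A| = (K - 1)%N by rewrite -cardC (cardsD1 A C) hA add1n subn1.
rewrite cK -[_ *+ (K - 1)%N]mulr_natr natrB ?(ltnW K_ge2) //.
move=> e; rewrite /gg -e; field; exact: K1.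
Qed.

Definition kappa i j : R := if j \in pblock C i then 1 - mu ^+ 2 else gg - mu ^+ 2.

Lemma coverC : cover C = [set: 'I_N].
Proof. by case/and3P: partC => /eqP. Qed.

Lemma trivC : trivIset C.
Proof. by case/and3P: partC. Qed.

Lemma cov_i i : E (fun S => (@Zof R N C S i - E (fun S' => @Zof R N C S' i)) *
      (exposure w (@Zof R N C S) i - E (fun S' => exposure w (@Zof R N C S') i)))
   = \sum_j c i j * kappa i j.
Proof.
rewrite E_cov.
rewrite (@E_ext (fun S => @Zof R N C S i * exposure w (@Zof R N C S) i)
   (fun S => \sum_j c i j * (@Zof R N C S i * @Zof R N C S j))); last first.
  by move=> S _; rewrite exposure_lin mulr_sumr; apply: eq_bigr => j _; ring.
rewrite (@E_ext (fun S => exposure w (@Zof R N C S) i)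
   (fun S => \sum_j c i j * @Zof R N C S j)); last by move=> S _; rewrite exposure_lin.
rewrite !E_sum mulr_sumr -sumrB; apply: eq_bigr => j _; rewrite !E_scale.
have mem x : pblock C x \in C by apply: pblock_mem; rewrite coverC inE.
have Zi : E (fun S => @Zof R N C S i) = mu by exact: (Ez _ (mem i)).
have Zj : E (fun S => @Zof R N C S j) = mu by exact: (Ez _ (mem j)).
rewrite Zi Zj /kappa; case: ifP => hj.
  have eb : pblock C j = pblock C i.
    by apply/eqP; rewrite eq_sym eq_pblock ?trivC // coverC inE.
  rewrite (@E_ext _ (fun _ => 1)); last by move=> S _; rewrite /Zof eb; exact: zz.
  rewrite E_const; ring.
have nb : pblock C i != pblock C j.
  by rewrite eq_pblock ?trivC ?coverC ?inE ?hj.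
rewrite (Ezz _ _ (mem i) (mem j) nb); ring.
Qed.

Lemma trace_formula :
  trace_cov w KT C = (1 - mu ^+ 2) * N%:R + (gg - 1) * Hcal w C.
Proof.
rewrite /trace_cov; under eq_bigr => i _ do rewrite cov_i.
transitivity (\sum_(i < N) ((1 - mu ^+ 2) * \sum_j c i j +
   (gg - 1) * \sum_(j < N | j \notin pblock C i) c i j)).
  apply: eq_bigr => i _.
  rewrite (bigID (fun j => j \in pblock C i)) /=.
  rewrite [X in _ = _ * X + _](bigID (fun j => j \in pblock C i)) /=.
  rewrite (eq_bigr (fun j => c i j * (1 - mu ^+ 2))); last first.
    by move=> j hj; rewrite /kappa hj.
  rewrite [X in _ + X = _](eq_bigr (fun j => c i j * (gg - mu ^+ 2))); last first.
    by move=> j /negbTE h; rewrite /kappa h.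
  rewrite -!mulr_suml; ring.
rewrite big_split /= -!mulr_sumr sum_c.
by [].
Qed.

End Fixed.

Lemma gg_lt1 : gg - 1 < 0.
Proof.
have k0 : (0 : R) < K%:R by rewrite ltr0n; apply: leq_trans K_ge2.
have k1 : (1 : R) < K%:R by rewrite ltr1n.
have t0 : (0 : R) < KT%:R by rewrite ltr0n.
have t1 : (KT%:R : R) < K%:R by rewrite ltr_nat.
have e : gg - 1 = ((2 * KT%:R - K%:R) ^+ 2 - K%:R ^+ 2) / (K%:R * (K%:R - 1)).
  rewrite /gg /mu; field; apply/andP; split; rewrite ?gt_eqF // subr_gt0 //.
rewrite e ltr_pdivrMr ?mul0r; last by rewrite mulr_gt0 // subr_gt0.
rewrite subr_lt0; nra.
Qed.

Lemma main_iff (C : {set {set 'I_N}}) (hC : balanced_partition K C) :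
  (forall C' : {set {set 'I_N}}, balanced_partition K C' ->
     trace_cov w KT C' <= trace_cov w KT C)
  <->
  (forall C' : {set {set 'I_N}}, balanced_partition K C' ->
     Hcal w C <= Hcal w C').
Proof.
split=> h C' hC'; move: (h C' hC').
  by rewrite !trace_formula // lerD2l ler_nM2l // gg_lt1.
by move=> hle; rewrite !trace_formula // lerD2l ler_nM2l // gg_lt1.
Qed.

End Main.

Theorem lemma2 (R : realFieldType) (N M : nat) (w : 'I_N -> 'I_M -> R)
  (K KT : nat)
  (w_ge0 : forall i s, 0 <= w i s)
  (row_pos : forall i, 0 < \sum_(s < M) w i s)
  (col_pos : forall s, 0 < \sum_(i < N) w i s)
  (K_ge2 : (2 <= K)%N) (K_dvd : (K %| N)%N)
  (KT_pos : (0 < KT)%N) (KT_lt : (KT < K)%N)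
  (C : {set {set 'I_N}}) (hC : balanced_partition K C) :
  (forall C' : {set {set 'I_N}}, balanced_partition K C' ->
     trace_cov w KT C' <= trace_cov w KT C)
  <->
  (forall C' : {set {set 'I_N}}, balanced_partition K C' ->
     Hcal w C <= Hcal w C').
Proof. exact: (@main_iff R N M w K KT row_pos col_pos K_ge2 KT_pos KT_lt C hC). Qed.
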